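(* Let $(X,\mathcal{C},O)$ be a simple compatibility scenario with $O=\{0,1\}$ whose compatibility graph contains at least one cycle, and let $\mathrm{B}=\{p_C\}$ be a nondisturbing behavior for it. Then $\mathrm{B}$ is logically contextual if and only if there exist a cycle $N_1,N_2,\dots,N_m$ ($m\geq 3$) of the compatibility graph, an index $1\leq i\leq m$, $(a,b)\in\{0,1\}^2$ and $(\alpha_1,\dots,\alpha_{m-2})\in\{0,1\}^{m-2}$ such that, writing $q_r(x,y)$ for the probability, under $p_{\{N_r,N_{r+1}\}}$, that $N_r=x$ and $N_{r+1}=y$ (indices modulo $m$), $q_i(a,b)>0$, $q_{i+1}(b,\alpha_1)=0$, $q_{i+j}(\lnot\alpha_{j-1},\alpha_j)=0$ for $2\leq j\leq m-2$, and $q_{i+m-1}(\lnot\alpha_{m-2},a)=0$, where $\lnot x=1-x$.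
   Context: A compatibility scenario is a triple $(X,\mathcal{C},O)$ with $X,O$ finite sets and $\mathcal{C}$ a family of subsets of $X$ (contexts) covering $X$, none properly contained in another. It is simple if every context has at most two elements; its compatibility graph has vertex set $X$ and an edge $\{M,M'\}$ for each two-element context. A cycle is a sequence of distinct vertices $N_1,\dots,N_m$, $m\geq3$, with $\{N_r,N_{r+1}\}\in\mathcal{C}$ for all $r$ (indices mod $m$). For $\Omega\subseteq X$, $O^\Omega$ is the set of functions $\Omega\to O$. A behavior is a family of probability distributions $p_C$ on $O^C$, $C\in\mathcal{C}$; it is nondisturbing if for all $C,C'$ the marginals of $p_C$ and $p_{C'}$ on $C\cap C'$ coincide. Let $\bar p_C(s)=1$ if $p_C(s)>0$, else $0$. The behavior is logically noncontextual if there is $\bar p:O^X\to\{0,1\}$ with $\max\{\bar p(t):t\in O^X, t|_C=s\}=\bar p_C(s)$ for all $C\in\mathcal{C}$, $s\in O^C$; otherwise logically contextual. *)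

(* Defs.v *)
From mathcomp Require Import all_boot all_order all_algebra.
Set Implicit Arguments. Unset Strict Implicit. Unset Printing Implicit Defensive.
Import Order.TTheory GRing.Theory Num.Theory.
Local Open Scope ring_scope.

(* Outcome set O = {0,1} is encoded as bool (false = 0, true = 1).
   An assignment s in O^C (C : {set X}) is encoded as its canonical
   extension to a total function X -> bool which is [false] outside C. *)

Section Scenario.
Variable X : finType.

Definition restr (D : {set X}) (s : {ffun X -> bool}) : {ffun X -> bool} :=
  [ffun x => if x \in D then s x else false].

Definition sections (C : {set X}) : {set {ffun X -> bool}} :=
  [set s : {ffun X -> bool} | [forall x, (x \notin C) ==> ~~ s x]].

Definition compat_scenario (ctx : {set {set X}}) : Prop :=
  (forall x : X, exists2 C, C \in ctx & x \in C) /\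
  (forall C C', C \in ctx -> C' \in ctx -> ~~ (C \proper C')).

Definition simple_scenario (ctx : {set {set X}}) : Prop :=
  forall C, C \in ctx -> (#|C| <= 2)%N.

(* A cycle N_0, ..., N_{m-1} (0-based, indices mod m) in the compatibility
   graph: distinct vertices, m >= 3, and {N_r, N_{r+1 mod m}} a context. *)
Definition is_cycle (ctx : {set {set X}}) (m : nat) (N : nat -> X) : Prop :=
  (3 <= m)%N /\
  (forall r1 r2, (r1 < m)%N -> (r2 < m)%N -> N r1 = N r2 -> r1 = r2) /\
  (forall r, (r < m)%N -> [set N r; N ((r + 1) %% m)%N] \in ctx).

Variable R : realFieldType.

Definition behavior (ctx : {set {set X}})
    (p : {set X} -> {ffun X -> bool} -> R) : Prop :=
  forall C, C \in ctx ->
    (forall s, s \in sections C -> 0 <= p C s) /\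
    \sum_(s in sections C) p C s = 1.

Definition marginal (p : {set X} -> {ffun X -> bool} -> R)
    (C D : {set X}) (t : {ffun X -> bool}) : R :=
  \sum_(s in sections C | restr D s == t) p C s.

Definition nondisturbing (ctx : {set {set X}})
    (p : {set X} -> {ffun X -> bool} -> R) : Prop :=
  forall C C', C \in ctx -> C' \in ctx ->
    forall t, t \in sections (C :&: C') ->
      marginal p C (C :&: C') t = marginal p C' (C :&: C') t.

(* Logical noncontextuality: there is pbar : O^X -> {0,1} with
   max { pbar t | t|_C = s } = bar p_C (s) for all contexts C, s in O^C. *)
Definition logically_noncontextual (ctx : {set {set X}})
    (p : {set X} -> {ffun X -> bool} -> R) : Prop :=
  exists pbar : {ffun X -> bool} -> bool,
    forall C, C \in ctx -> forall s, s \in sections C ->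
      [exists t, pbar t && (restr C t == s)] = (0 < p C s).

Definition logically_contextual (ctx : {set {set X}})
    (p : {set X} -> {ffun X -> bool} -> R) : Prop :=
  ~ logically_noncontextual ctx p.

Definition qprob (p : {set X} -> {ffun X -> bool} -> R) (m : nat)
    (N : nat -> X) (r : nat) (x y : bool) : R :=
  let u := N (r %% m)%N in let v := N ((r + 1) %% m)%N in
  \sum_(s in sections [set u; v] | (s u == x) && (s v == y)) p [set u; v] s.

End Scenario.

(* Main.v *)
Require Import Defs.
From mathcomp Require Import all_boot all_order all_algebra.
From mathcomp Require Import zify.
From Stdlib Require Import Classical.
Set Implicit Arguments. Unset Strict Implicit. Unset Printing Implicit Defensive.
Import Order.TTheory GRing.Theory Num.Theory.
Local Open Scope ring_scope.

Section Helpers.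
Variable R : realFieldType.

Lemma sum_ge_term (I : finType) (P : pred I) (F : I -> R) i :
  P i -> (forall j, P j -> 0 <= F j) -> F i <= \sum_(j | P j) F j.
Proof.
move=> Pi H; rewrite (bigD1 i) //= lerDl.
by apply: sumr_ge0 => j /andP[Pj _]; exact: H.
Qed.

Lemma sum_pos_ex (I : finType) (P : pred I) (F : I -> R) :
  (forall j, P j -> 0 <= F j) -> 0 < \sum_(j | P j) F j ->
  exists j, P j /\ 0 < F j.
Proof.
move=> H Hs.
case: (boolP [exists j, P j && (0 < F j)]) => [/existsP[j /andP[]] | /existsPn Hn].
  by move=> ? ?; exists j.
suff E : \sum_(j | P j) F j = 0 by rewrite E ltxx in Hs.
apply: big1 => j Pj; have := Hn j; rewrite Pj /= => Hn'.
by move: (H j Pj); rewrite le_eqVlt (negbTE Hn') orbF => /eqP <-.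
Qed.

End Helpers.

Lemma bool_neq (x y : bool) : (x == y) = false -> x = ~~ y.
Proof. by case: x; case: y. Qed.

Section Main.
Variables (R : realFieldType) (X : finType) (ctx : {set {set X}})
  (p : {set X} -> {ffun X -> bool} -> R).
Hypotheses (Hsimple : simple_scenario ctx) (Hbeh : behavior ctx p)
  (Hnd : nondisturbing ctx p).

Lemma sectionsP (C : {set X}) s (x : X) : s \in sections C -> x \notin C -> s x = false.
Proof. by rewrite inE => /forallP/(_ x) /implyP H /H /negbTE. Qed.

Lemma restr_sections (C : {set X}) t : restr C t \in sections C.
Proof. by rewrite inE; apply/forallP => x; apply/implyP => Hx; rewrite ffunE (negbTE Hx). Qed.

Lemma nonneg (C : {set X}) s : C \in ctx -> s \in sections C -> 0 <= p C s.
Proof. by move=> HC; case: (Hbeh HC) => H _; exact: H. Qed.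

Definition pe (u v : X) (x y : bool) : R :=
  \sum_(s in sections [set u; v] | (s u == x) && (s v == y)) p [set u; v] s.

Lemma qprobE m N r x y :
  qprob p m N r x y = pe (N (r %% m)%N) (N ((r + 1) %% m)%N) x y.
Proof. by []. Qed.

Lemma peC u v x y : pe u v x y = pe v u y x.
Proof.
rewrite /pe (_ : [set u; v] = [set v; u]); last by rewrite setUC.
by apply: eq_bigl => s /=; congr (_ && _); exact: andbC.
Qed.

Lemma pe_ge0 u v x y : [set u; v] \in ctx -> 0 <= pe u v x y.
Proof. move=> H; apply: sumr_ge0 => s /andP[Hs _]; exact: nonneg. Qed.

Lemma pe_ge u v s : [set u; v] \in ctx -> s \in sections [set u; v] ->
  p [set u; v] s <= pe u v (s u) (s v).
Proof.
move=> H Hs; apply: (sum_ge_term (P := fun s0 => (s0 \in sections [set u; v]) && ((s0 u == s u) && (s0 v == s v)))).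
  by rewrite Hs !eqxx.
by move=> j /andP[Hj _]; exact: nonneg.
Qed.

Lemma pe_pos u v x y : [set u; v] \in ctx -> 0 < pe u v x y ->
  exists s, [/\ s \in sections [set u; v], s u = x, s v = y & 0 < p [set u; v] s].
Proof.
move=> H /(sum_pos_ex _) [].
  by move=> j /andP[Hj _]; exact: nonneg.
by move=> s [/andP[Hs /andP[/eqP <- /eqP <-]] Hp]; exists s.
Qed.


Lemma transfer (C C' : {set X}) s y : C \in ctx -> C' \in ctx -> y \in C -> y \in C' ->
  s \in sections C -> 0 < p C s ->
  exists s', [/\ s' \in sections C', s' y = s y & 0 < p C' s'].
Proof.
move=> HC HC' Hy Hy' Hs Hp.
set D := C :&: C'.
have tD : restr D s \in sections D := restr_sections _ _.
have E := Hnd HC HC' tD.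
have pos : 0 < marginal p C D (restr D s).
  apply: lt_le_trans Hp _; rewrite /marginal.
  apply: (sum_ge_term (P := fun s0 => (s0 \in sections C) && (restr D s0 == restr D s))).
    by rewrite Hs eqxx.
  by move=> j /andP[Hj _]; exact: nonneg.
rewrite E /marginal in pos.
case: (sum_pos_ex _ pos) => [j /andP[Hj _]|s' [/andP[Hs' /eqP E'] Hp']]; first exact: nonneg.
exists s'; split => //.
have yD : y \in C :&: C' by rewrite inE Hy Hy'.
have := congr1 (fun f : {ffun X -> bool} => f y) E'.
by rewrite /= !ffunE /D yD.
Qed.

Definition supp (l : X * bool) : Prop :=
  forall C, C \in ctx -> l.1 \in C ->
    exists s, [/\ s \in sections C, s l.1 = l.2 & 0 < p C s].

Lemma supp_ex (C : {set X}) s y : C \in ctx -> y \in C -> s \in sections C -> 0 < p C s ->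
  supp (y, s y).
Proof. by move=> HC Hy Hs Hp C' HC' Hy'; exact: (transfer HC HC' Hy Hy' Hs Hp). Qed.

Definition forced (l l' : X * bool) : bool :=
  (l.1 != l'.1) && ([set l.1; l'.1] \in ctx) && (pe l.1 l'.1 l.2 (~~ l'.2) == 0).

Definition neg (l : X * bool) := (l.1, ~~ l.2).

Lemma negK l : neg (neg l) = l.
Proof. by case: l => x c; rewrite /neg /= negbK. Qed.

Lemma forced_neg l l' : forced l l' = forced (neg l') (neg l).
Proof.
case: l l' => [x c] [y d]; rewrite /forced /neg /= negbK eq_sym.
by rewrite [[set y; x]]setUC peC.
Qed.

Lemma col_pos u v c d : [set u; v] \in ctx -> supp (v, d) -> pe u v c d = 0 ->
  0 < pe u v (~~ c) d.
Proof.
move=> HC Hs H0.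
case: (Hs _ HC (set22 _ _)) => s /= [Hss Hsv Hp].
have := pe_ge HC Hss; rewrite Hsv.
case E: (s u == c).
  by rewrite (eqP E) H0 => /(lt_le_trans Hp); rewrite ltxx.
rewrite (bool_neq E).
exact: lt_le_trans.
Qed.

Lemma supp_forced l l' : supp l -> forced l l' -> supp l'.
Proof.
case: l l' => [x c] [y d] Hl /andP[/andP[/= Hne Hc] /eqP H0].
case: (Hl _ Hc (set21 _ _)) => s /= [Hs Hsx Hp].
have Hsy : s y = d.
  case E: (s y == d); first by move/eqP: E.
  have E' := bool_neq E.
  by have := pe_ge Hc Hs; rewrite Hsx E' /= H0 => /(lt_le_trans Hp); rewrite ltxx.
by have := supp_ex Hc (set22 _ _) Hs Hp; rewrite Hsy.
Qed.

Definition walk (L : nat -> X * bool) n := forall r, (r < n)%N -> forced (L r) (L r.+1).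

Lemma supp_walk L n : supp (L 0%N) -> walk L n -> forall r, (r <= n)%N -> supp (L r).
Proof.
move=> H0 Hw; elim => [//|r IH] Hr.
exact: (supp_forced (IH (ltnW Hr)) (Hw r Hr)).
Qed.

Lemma walk_connect L n : walk L n -> connect forced (L 0%N) (L n).
Proof.
elim: n => [|n IH] Hw; first exact: connect0.
apply: connect_trans (IH _) (connect1 (Hw n _)) => // r Hr.
by apply: Hw; apply: ltnW.
Qed.

Lemma connect_walk a b : connect forced a b ->
  exists n L, [/\ L 0%N = a, L n = b & walk L n].
Proof.
case/connectP => q Hq ->.
exists (size q), (fun r => nth a (a :: q) r); split => //.
  by rewrite -[X in nth a (a :: q) X]/((size (a :: q)).-1) nth_last.
move=> r Hr; exact: (pathP a Hq r Hr).
Qed.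

Lemma connect_neg a b : connect forced a b -> connect forced (neg b) (neg a).
Proof.
case/connect_walk => n [L [<- <- Hw]].
pose L' r := neg (L (n - r)%N).
have -> : neg (L n) = L' 0%N by rewrite /L' subn0.
have -> : neg (L 0%N) = L' n by rewrite /L' subnn.
apply: walk_connect => r Hr.
rewrite /L' -forced_neg (_ : (n - r = (n - r.+1).+1)%N); last by lia.
apply: Hw; lia.
Qed.

Lemma supp_connect a b : supp a -> connect forced a b -> supp b.
Proof.
move=> Ha /connect_walk [n [L [H0 <- Hw]]].
by apply: (supp_walk _ Hw) => //; rewrite H0.
Qed.


Definition badwalk (L : nat -> X * bool) n :=
  [/\ walk L n, (L n).1 != (L 0%N).1, [set (L n).1; (L 0%N).1] \in ctx &
      0 < pe (L n).1 (L 0%N).1 (~~ (L n).2) (L 0%N).2].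

Definition Pat : Prop :=
   exists (m : nat) (N : nat -> X) (i : nat) (a b : bool) (alpha : nat -> bool),
     [/\ is_cycle ctx m N, (i < m)%N &
        [/\ 0 < qprob p m N i a b,
         qprob p m N (i + 1) b (alpha 1%N) = 0,
         (forall j, (2 <= j <= m - 2)%N ->
            qprob p m N (i + j) (~~ alpha (j - 1)%N) (alpha j) = 0) &
         qprob p m N (i + m - 1) (~~ alpha (m - 2)%N) a = 0]].

Lemma loop_bad L n : supp (L 0%N) -> walk L n -> L n = neg (L 0%N) -> badwalk L n.-1.
Proof.
move=> Hs Hw Hn.
case: n Hw Hn => [|[|k]] Hw Hn.
- by move: (congr1 snd Hn); rewrite /neg /=; case: (L 0%N).2.
- by move: (Hw 0%N isT); rewrite Hn /forced /neg /= eqxx.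
- move: (Hw k.+1 (ltnSn _)); rewrite Hn /forced /neg /= negbK => /andP[/andP[Hne Hc] /eqP H0].
  split => //.
  all: try (by move=> r Hr; apply: Hw; apply: (ltn_trans Hr)).
  all: try (apply: col_pos => //; by case: (L 0%N) Hs).
Qed.

Lemma supp_bad L n : badwalk L n -> supp (L 0%N).
Proof.
case=> _ _ Hc /(pe_pos Hc) [s [Hs _ Hs0 Hp]].
have := supp_ex Hc (set22 _ _) Hs Hp.
by rewrite Hs0; case: (L 0%N).
Qed.

Lemma distinct_pat L n : badwalk L n ->
  (forall i j, (i <= n)%N -> (j <= n)%N -> (L i).1 = (L j).1 -> i = j) -> Pat.
Proof.
move=> [Hw Hne Hc Hpos] Hd.
have n2 : (2 <= n)%N.
  case: n Hw Hne Hc Hpos Hd => [|[|n]] Hw Hne Hc Hpos Hd //.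
    by rewrite eqxx in Hne.
  move: (Hw 0%N isT) => /andP[_ /eqP H0].
  by rewrite peC H0 ltxx in Hpos.
exists n.+1, (fun r => (L r).1), n, (~~ (L n).2), (L 0%N).2, (fun j => ~~ (L j).2).
split.
- split; first by lia.
  split; first by move=> r1 r2 h1 h2; apply: Hd.
  move=> r; rewrite ltnS leq_eqVlt => /orP[/eqP -> | hr].
    by rewrite addn1 modnn.
  rewrite addn1 modn_small; last by lia.
  by case/andP: (Hw r hr) => /andP[_ ?] _.
- exact: ltnSn.
- split.
  + by rewrite qprobE modn_small // addn1 modnn.
  + rewrite qprobE addn1 modnn (_ : (n.+1 + 1 = 1 + n.+1)%N); last by lia.
    rewrite modnDr modn_small; last by lia.
    by case/andP: (Hw 0%N ltac:(lia)) => _ /eqP.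
  + move=> j /andP[j2 jn].
    rewrite qprobE (_ : (n + j = (j - 1) + n.+1)%N); last by lia.
    rewrite (_ : ((j - 1) + n.+1 + 1 = j + n.+1)%N); last by lia.
    rewrite !modnDr !modn_small; try lia.
    have := Hw (j - 1)%N ltac:(lia).
    rewrite (_ : (j - 1).+1 = j)%N; last by lia.
    by case/andP => _ /eqP; rewrite negbK.
  + rewrite qprobE (_ : (n + n.+1 - 1 = (n - 1) + n.+1)%N); last by lia.
    rewrite (_ : ((n - 1) + n.+1 + 1 = n + n.+1)%N); last by lia.
    rewrite (_ : (n.+1 - 2 = n - 1)%N); last by lia.
    rewrite !modnDr !modn_small; try lia.
    have := Hw (n - 1)%N ltac:(lia).
    rewrite (_ : (n - 1).+1 = n)%N; last by lia.
    by case/andP => _ /eqP; rewrite negbK.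
Qed.

Lemma bad_pat_aux k : forall n L, (n <= k)%N -> badwalk L n -> Pat.
Proof.
elim: k => [|k IH] n L Hn Hb.
  move: Hn; rewrite leqn0 => /eqP En; subst n.
  by case: Hb => _; rewrite eqxx.
case: (boolP [exists i : 'I_n.+1, exists j : 'I_n.+1, (i < j)%N && ((L i).1 == (L j).1)]).
- case/existsP => [[i Hi]] /existsP [[j Hj]] /andP[/= Hij /eqP Eij].
  have Hw := Hb; case: Hw => Hw Hne Hc Hpos.
  case E: ((L i).2 == (L j).2).
  +
    have ELij : L i = L j by move: Eij (eqP E); case: (L i); case: (L j) => ? ? ? ? /= -> ->.
    pose L' r := if (r <= i)%N then L r else L (r + (j - i))%N.
    have HL0 : L' 0%N = L 0%N by [].
    have HLn : L' (n - (j - i))%N = L n.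
      rewrite /L'; case: leqP => H.
        have Ejn : j = n by lia.
        have -> : (n - (j - i) = i)%N by lia.
        by rewrite ELij Ejn.
      have -> : (n - (j - i) + (j - i) = n)%N by lia.
      by [].
    have HL' : badwalk L' (n - (j - i))%N.
      rewrite /badwalk HL0 HLn; split => //.
      move=> r Hr; rewrite /L'.
      case: (ltngtP r i) => Hri.
      - apply: Hw; lia.
      - rewrite (_ : (r.+1 + (j - i) = (r + (j - i)).+1)%N); last by lia.
        apply: Hw; lia.
      - rewrite Hri ELij (_ : (i.+1 + (j - i) = j.+1)%N); last by lia.
        apply: Hw; lia.
    apply: (IH _ L' _ HL'); lia.
  +
    have Hs0 := supp_bad Hb.
    have Hsi := supp_walk Hs0 Hw (r:=i) ltac:(lia).
    pose L' r := L (i + r)%N.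
    have HL' : badwalk L' (j - i).-1.
      apply: loop_bad.
      * by rewrite /L' addn0.
      * move=> r Hr; rewrite /L' addnS; apply: Hw; lia.
      * rewrite /L' addn0 (_ : (i + (j - i) = j)%N); last by lia.
        rewrite /neg; move: Eij (bool_neq E); case: (L i) => xi ci; case: (L j) => xj cj /= -> ->.
        by rewrite negbK.
    apply: (IH _ L' _ HL'); lia.
- move/existsPn => Hn'.
  apply: (distinct_pat Hb) => i j Hi Hj Eij.
  case: (ltngtP i j) => // Hij.
  + by move: (Hn' (@Ordinal n.+1 i Hi)) => /existsPn /(_ (@Ordinal n.+1 j Hj)); rewrite /= Hij Eij eqxx.
  + by move: (Hn' (@Ordinal n.+1 j Hj)) => /existsPn /(_ (@Ordinal n.+1 i Hi)); rewrite /= Hij Eij eqxx.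
Qed.


Lemma bad_pat L n : badwalk L n -> Pat.
Proof. exact: (@bad_pat_aux n n L (leqnn n)). Qed.

Lemma noloop (nP : ~ Pat) a : supp a -> ~~ connect forced a (neg a).
Proof.
move=> Ha; apply/negP => /connect_walk [n [L [H0 Hn Hw]]].
apply: nP; apply: (@bad_pat L n.-1); apply: loop_bad => //.
  by rewrite H0.
by rewrite Hn H0.
Qed.

Definition closedT (T : {set X * bool}) : Prop :=
  [/\ (forall l, l \in T -> supp l),
      (forall l l', l \in T -> forced l l' -> l' \in T) &
      (forall z c, (z, c) \in T -> (z, ~~ c) \notin T)].

Lemma closed_connect T a b : closedT T -> a \in T -> connect forced a b -> b \in T.
Proof.
move=> [_ Hf _] Ha /connect_walk [n [L [H0 <- Hw]]].
elim: n Hw => [|n IH] Hw; first by rewrite H0.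
apply: (Hf (L n)); last exact: Hw.
by apply: IH => r Hr; apply: Hw; apply: ltnW.
Qed.

Definition unassigned (T : {set X * bool}) : {set X} :=
  [set z | [forall c, (z, c) \notin T]].

Lemma ext (nP : ~ Pat) k : forall T, closedT T -> (#|unassigned T| <= k)%N ->
  exists T', [/\ closedT T', T \subset T' & forall z, exists c, (z, c) \in T'].
Proof.
elim: k => [|k IH] T HT Hk.
  exists T; split => // z.
  move: Hk; rewrite leqn0 => /eqP/cards0_eq Hu.
  have : z \notin unassigned T by rewrite Hu inE.
  rewrite inE negb_forall => /existsP [c]; rewrite negbK => Hc.
  by exists c.
case: (pickP (mem (unassigned T))) => [z Hz | Hnone]; last first.
  exists T; split => // z.
  move: (Hnone z); rewrite /= inE => /negbT; rewrite negb_forall => /existsP [c]; rewrite negbK.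
  by exists c.
have Hz' : forall c, (z, c) \notin T by move: Hz; rewrite /= inE => /forallP.
have [c Hc] : exists c, supp (z, c).
  case: (boolP [exists C in ctx, z \in C]) => [/existsP [C /andP[HC HzC]] | /existsPn Hn].
    case: (Hbeh HC) => Hnn Hsum.
    have : 0 < \sum_(s in sections C) p C s by rewrite Hsum ltr01.
    case/sum_pos_ex => [j Hj|s [Hs Hp]]; first exact: Hnn.
    exists (s z); exact: supp_ex HC HzC Hs Hp.
  exists true => C HC HzC; exfalso.
  by move: (Hn C); rewrite HC HzC.
case: HT => Ts Tf Tc.
set T1 := T :|: [set l | connect forced (z, c) l].
have HT1 : closedT T1.
  split.
  - move=> l; rewrite !inE => /orP[/Ts // | Hl].
    exact: supp_connect Hc Hl.
  - move=> l l'; rewrite !inE => /orP[Hl | Hl] Hf.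
      by rewrite (Tf _ _ Hl Hf).
    by rewrite (connect_trans Hl (connect1 Hf)) orbT.
  - move=> w e; rewrite !inE => /orP[Hl | Hl]; apply/negP => /orP[Hl' | Hl'].
    + by move: (Tc _ _ Hl); rewrite Hl'.
    + move: (connect_neg Hl'); rewrite /neg /= negbK => Hl2.
      by move: (Hz' (~~ c)); rewrite (closed_connect (And3 Ts Tf Tc) Hl Hl2).
    + move: (connect_neg Hl) => /= Hl2.
      by move: (Hz' (~~ c)); rewrite (closed_connect (And3 Ts Tf Tc) Hl' Hl2).
    + move: (connect_neg Hl'); rewrite /neg /= negbK => Hl2.
      by move: (noloop nP Hc); rewrite /neg /= (connect_trans Hl Hl2).
have sub1 : T \subset T1 by apply: subsetUl.
have [T' [HT' sub' Hfull]] : exists T', [/\ closedT T', T1 \subset T' & forall z, exists c, (z, c) \in T'].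
  apply: IH => //.
  have Hpr : unassigned T1 \proper unassigned T.
    apply/properP; split.
      apply/subsetP => y; rewrite !inE => /forallP H; apply/forallP => d.
      by apply: contra (H d); apply: (subsetP sub1).
    exists z => //; rewrite inE negb_forall; apply/existsP; exists c.
    by rewrite negbK !inE connect0 orbT.
  by move: (proper_card Hpr) => H; rewrite -ltnS (leq_trans H Hk).
exists T'; split => //; exact: subset_trans sub1 sub'.
Qed.


Lemma consistent T (t : {ffun X -> bool}) : closedT T -> (forall x, (x, t x) \in T) ->
  forall C, C \in ctx -> 0 < p C (restr C t).
Proof.
move=> [Ts Tf Tc] Ht C HC.
suff [s [Hs Ag Hp]] : exists s, [/\ s \in sections C, (forall x, x \in C -> s x = t x) & 0 < p C s].
  suff -> : restr C t = s by [].
  apply/ffunP => x; rewrite ffunE; case: ifP => Hx; first by rewrite Ag.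
  by rewrite (sectionsP Hs) // Hx.
move: (Hsimple HC); rewrite leq_eqVlt ltnS leq_eqVlt ltnS leqn0.
case/orP => [/cards2P [x [y [Hxy EC]]] | /orP[/cards1P [x EC] | /eqP/cards0_eq EC]].
- have HC' := HC; rewrite EC in HC'.
  have Hpos : 0 < pe x y (t x) (t y).
    rewrite lt_def pe_ge0 // andbT; apply/negP => /eqP H0.
    have Hf : forced (x, t x) (y, ~~ t y) by rewrite /forced /= Hxy HC' negbK H0 eqxx.
    by move: (Tc _ _ (Tf _ _ (Ht x) Hf)); rewrite negbK Ht.
  case: (pe_pos HC' Hpos) => s [Hs Hsx Hsy Hp].
  exists s; rewrite EC; split => // z /set2P [->|->] //.
- case: (Ts _ (Ht x) C HC); first by rewrite EC set11.
  move=> s /= [Hs Hsx Hp]; exists s; split => // z; rewrite EC => /set1P -> //.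
- case: (Hbeh HC) => Hnn Hsum.
  have : 0 < \sum_(s in sections C) p C s by rewrite Hsum ltr01.
  case/sum_pos_ex => [j Hj|s [Hs Hp]]; first exact: Hnn.
  by exists s; split => // z; rewrite EC inE.
Qed.

Lemma noncontextual (nP : ~ Pat) : logically_noncontextual ctx p.
Proof.
exists (fun t => [forall C in ctx, 0 < p C (restr C t)]).
move=> C HC s Hs; apply/idP/idP.
  case/existsP => t /andP[/forallP /(_ C) /implyP /(_ HC) Hp /eqP Ht].
  by rewrite -Ht.
move=> Hp.
set T0 := [set l | [exists x in C, connect forced (x, s x) l]].
have Hseed : forall x, x \in C -> (x, s x) \in T0.
  by move=> x Hx; rewrite inE; apply/existsP; exists x; rewrite Hx connect0.
have HT0 : closedT T0.
  split.
  - move=> l; rewrite inE => /existsP [x /andP[Hx Hl]].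
    exact: supp_connect (supp_ex HC Hx Hs Hp) Hl.
  - move=> l l'; rewrite !inE => /existsP [x /andP[Hx Hl]] Hf.
    by apply/existsP; exists x; rewrite Hx (connect_trans Hl (connect1 Hf)).
  - move=> w e; rewrite !inE => /existsP [x1 /andP[Hx1 H1]]; apply/negP => /existsP [x2 /andP[Hx2 H2]].
    move: (connect_neg H2); rewrite /neg /= negbK => H2'.
    have H12 := connect_trans H1 H2'.
    case: (eqVneq x1 x2) => [Ex | Hne].
      subst x2; by move: (noloop nP (supp_ex HC Hx1 Hs Hp)); rewrite /neg /= H12.
    have EC : C = [set x2; x1].
      apply/eqP; rewrite eq_sym eqEcard subUset !sub1set Hx1 Hx2 /= cards2 eq_sym Hne.
      exact: Hsimple.
    case/connect_walk: H12 => n [L [HL0 HLn Hw]].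
    apply: nP; apply: (@bad_pat L n); split => //.
    + by rewrite HL0 HLn /= eq_sym.
    + by rewrite HL0 HLn /= -EC.
    + rewrite HL0 HLn /= negbK.
      have HC' := HC; rewrite EC in HC'.
      have Hs' := Hs; rewrite EC in Hs'.
      apply: (lt_le_trans Hp); rewrite {1}EC; exact: pe_ge HC' Hs'.
have [T' [HT' sub Hfull]] := @ext nP _ T0 HT0 (leqnn _).
pose t := [ffun x => (x, true) \in T'].
have Ht : forall x, (x, t x) \in T'.
  move=> x; rewrite ffunE; case E: ((x, true) \in T') => //.
  case: (Hfull x) => [[]] H; first by rewrite H in E.
  exact: H.
case: (HT') => _ _ Tc.
apply/existsP; exists t; apply/andP; split.
  apply/forallP => C'; apply/implyP => HC'; exact: consistent HT' Ht C' HC'.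
apply/eqP/ffunP => x; rewrite ffunE; case: ifP => Hx; last by rewrite (sectionsP Hs) // Hx.
have H1 := subsetP sub _ (Hseed x Hx).
case E: (t x == s x); first by apply/eqP.
by move: (Tc _ _ (Ht x)); rewrite (bool_neq E) negbK H1.
Qed.


Lemma pat_ctx : Pat -> logically_contextual ctx p.
Proof.
move=> [m [N [i [a [b [al [[H3 [Hinj Hedge]] Him [Hq0 Hq1 Hqj Hqlast]]]]]]]] [pbar Hpbar].
have m0 : (0 < m)%N by lia.
have Hed : forall r, [set N (r %% m)%N; N ((r + 1) %% m)%N] \in ctx.
  move=> r; move: (Hedge (r %% m)%N (ltn_pmod _ m0)).
  by rewrite modnDml.
rewrite qprobE in Hq0.
case: (pe_pos (Hed i) Hq0) => s0 [Hs0 Hs0u Hs0v Hp0].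
move: (Hpbar _ (Hed i) s0 Hs0); rewrite Hp0 => /existsP [t /andP[Hpt /eqP Ht]].
pose g r := t (N (r %% m)%N).
have Hkey : forall r, qprob p m N r (g r) (g (r + 1)%N) != 0.
  move=> r; rewrite qprobE; set C := [set N (r %% m)%N; N ((r + 1) %% m)%N].
  have HC : C \in ctx := Hed r.
  have Hpos : 0 < p C (restr C t).
    rewrite -(Hpbar C HC (restr C t) (restr_sections _ _)).
    by apply/existsP; exists t; rewrite Hpt eqxx.
  have := pe_ge HC (restr_sections C t); rewrite !ffunE set21 set22 => H.
  by rewrite gt_eqF // (lt_le_trans Hpos H).
have gi : g i = a by rewrite /g -Hs0u -Ht ffunE set21.
have gi1 : g (i + 1)%N = b by rewrite /g -Hs0v -Ht ffunE set22.
have Hneq : forall r x y, qprob p m N r x y = 0 -> g r = x -> g (r + 1)%N = ~~ y.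
  move=> r x y H0 Hx; case E: (g (r + 1)%N == y).
    by move: (Hkey r); rewrite Hx (eqP E) H0 eqxx.
  exact: bool_neq.
have Hind : forall j, (1 <= j <= m - 2)%N -> g (i + j + 1)%N = ~~ al j.
  elim => [//|j IH] /andP[H1 H2].
  case: j IH H1 H2 => [|j] IH H1 H2.
    exact: (Hneq _ _ _ Hq1 gi1).
  have Hj2 : (2 <= j.+2 <= m - 2)%N by clear -H1 H2; lia.
  have H0 := Hqj j.+2 Hj2.
  apply: (Hneq _ _ _ H0).
  rewrite (_ : (j.+2 - 1 = j.+1)%N) // (_ : (i + j.+2 = i + j.+1 + 1)%N); last by clear; lia.
  apply: IH; clear -H1 H2; lia.
have := Hneq _ _ _ Hqlast.
rewrite (_ : (i + m - 1 = i + (m - 2) + 1)%N); last by clear -H3; lia.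
rewrite Hind; last by clear -H3; lia.
move=> /(_ erefl).
rewrite (_ : (i + (m - 2) + 1 + 1 = i + m)%N); last by clear -H3; lia.
rewrite /g modnDr -/(g i) gi.
by case: (a).
Qed.

End Main.

Theorem theorem3 (R : realFieldType) (X : finType) (ctx : {set {set X}})
    (p : {set X} -> {ffun X -> bool} -> R) :
  compat_scenario ctx ->
  simple_scenario ctx ->
  (exists m (N : nat -> X), is_cycle ctx m N) ->
  behavior ctx p ->
  nondisturbing ctx p ->
  (logically_contextual ctx p <->
   exists (m : nat) (N : nat -> X) (i : nat) (a b : bool) (alpha : nat -> bool),
     [/\ is_cycle ctx m N, (i < m)%N &
        [/\ 0 < qprob p m N i a b,
         qprob p m N (i + 1) b (alpha 1%N) = 0,
         (forall j, (2 <= j <= m - 2)%N ->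
            qprob p m N (i + j) (~~ alpha (j - 1)%N) (alpha j) = 0) &
         qprob p m N (i + m - 1) (~~ alpha (m - 2)%N) a = 0]]).
Proof.
move=> _ Hs _ Hb Hn; split.
  move=> Hc; apply: NNPP => nP; apply: Hc; exact: (noncontextual Hs Hb Hn nP).
exact: pat_ctx.
Qed.
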